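(* Let $H$ be a Kekul\'ean hexagonal system. For every integer $n\ge0$, the map $f$ is a bijection from the set of Clar covers of $H$ with exactly $n$ hexagons onto the set of induced subgraphs of $R(H)$ isomorphic to the $n$-cube $Q_n$.
   Context: A hexagonal system is a 2-connected finite plane graph in which every interior face is a regular hexagon of side length one; its hexagons are the boundaries of its interior faces; it is Kekul\'ean if it has a perfect matching. A Clar cover of $H$ is a spanning subgraph each of whose components is a hexagon of $H$ or a single edge. The resonance graph $R(H)$ has the perfect matchings of $H$ as vertices, two adjacent iff their symmetric difference is the edge set of a hexagon of $H$. For a Clar cover $C$, $f(C)$ denotes the subgraph of $R(H)$ induced by all perfect matchings $M$ of $H$ such that every hexagon component of $C$ is $M$-alternating and every single-edge component of $C$ belongs to $M$. *)

(* Defs.v *)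
From HB Require Import structures.
From mathcomp Require Import all_boot all_order all_algebra.
From mathcomp Require Import finmap.
Set Implicit Arguments. Unset Strict Implicit. Unset Printing Implicit Defensive.
Import Order.TTheory GRing.Theory Num.Theory.
Local Open Scope fset_scope.

(* Vertices: ((x,y), true) is the black vertex b(x,y), ((x,y), false) the
   white vertex w(x,y).
   Edges: ((x,y), d) is the edge joining b(x,y) to
     w(x,y)   if d = 0,  w(x-1,y) if d = 1,  w(x,y-1) if d = 2.
   Every lattice edge has exactly one such name.
   Hexagonal cells: the cell (i,j) is the 6-cycle
     b(i,j) - w(i,j) - b(i+1,j) - w(i+1,j-1) - b(i+1,j-1) - w(i,j-1) - b(i,j).
   These 6-cycles are exactly the faces of the honeycomb (unit regular
   hexagons in the usual drawing). *)
Definition cell := (int * int)%type.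
Definition vertex := ((int * int) * bool)%type.
Definition edge := ((int * int) * 'I_3)%type.

Definition bl (x y : int) : vertex := ((x, y), true).
Definition wh (x y : int) : vertex := ((x, y), false).

Definition edge_black (e : edge) : vertex := bl e.1.1 e.1.2.
Definition edge_white (e : edge) : vertex :=
  let: ((x, y), d) := e in
  if val d == 0%N then wh x y
  else if val d == 1%N then wh (x - 1)%R y
  else wh x (y - 1)%R.

Definition incident (v : vertex) (e : edge) : Prop :=
  v = edge_black e \/ v = edge_white e.

Definition mke (x y : int) (d : nat) : edge := ((x, y), inord d).

(* the six edges of cell (i,j), in cyclic order *)
Definition hex_edge_seq (c : cell) : seq edge :=
  let: (i, j) := c in
  [:: mke i j 0; mke (i + 1)%R j 1; mke (i + 1)%R j 2;
      mke (i + 1)%R (j - 1)%R 0; mke (i + 1)%R (j - 1)%R 1; mke i j 2].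

Definition hex_edges (c : cell) : {fset edge} := [fset e | e in hex_edge_seq c].

Definition hex_verts (c : cell) : seq vertex :=
  let: (i, j) := c in
  [:: bl i j; wh i j; bl (i + 1)%R j; wh (i + 1)%R (j - 1)%R;
      bl (i + 1)%R (j - 1)%R; wh i (j - 1)%R].

(* two cells share an edge *)
Definition cell_adj (c d : cell) : Prop :=
  let: (a, b) := c in
  d \in [:: ((a + 1)%R, b); ((a - 1)%R, b); (a, (b + 1)%R); (a, (b - 1)%R);
           ((a + 1)%R, (b - 1)%R); ((a - 1)%R, (b + 1)%R)].

Fixpoint walk (T : Type) (R : T -> T -> Prop) (x : T) (p : seq T) : Prop :=
  match p with
  | [::] => True
  | y :: q => R x y /\ walk R y q
  end.

Section Graph.
Variable S : {fset cell}.

Definition edge_of (e : edge) : Prop := exists2 c, c \in S & e \in hex_edges c.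
Definition vertex_of (v : vertex) : Prop := exists2 c, c \in S & v \in hex_verts c.

Definition adjH (u v : vertex) : Prop :=
  exists2 e, edge_of e &
    ((u = edge_black e /\ v = edge_white e) \/ (v = edge_black e /\ u = edge_white e)).

Definition joined_avoiding (z : vertex) (u v : vertex) : Prop :=
  exists p : seq vertex, walk adjH u p /\ last u p = v /\ (forall w, w \in u :: p -> w <> z).

Definition connectedH : Prop :=
  forall u v, vertex_of u -> vertex_of v ->
    exists p : seq vertex, walk adjH u p /\ last u p = v.

Definition two_connected : Prop :=
  connectedH /\
  (exists u v w, [/\ vertex_of u, vertex_of v, vertex_of w & [/\ u <> v, v <> w & u <> w]]) /\
  (forall z u v, vertex_of z -> vertex_of u -> vertex_of v -> u <> z -> v <> z ->
     joined_avoiding z u v).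

(* no holes: every cell outside S is joined, through cells outside S, to a
   cell lying strictly to the right of all cells of S (i.e. it lies in the
   unbounded face); hence the interior faces of H are exactly the cells of S *)
Definition hole_free : Prop :=
  forall c, c \notin S ->
    exists p : seq cell, [/\ walk cell_adj c p, (forall d, d \in p -> d \notin S) &
                             (forall d, d \in S -> (d.1 < (last c p).1)%R)].

Definition hexagonal_system : Prop := S != fset0 /\ two_connected /\ hole_free.

Definition perfect_matching (M : {fset edge}) : Prop :=
  (forall e, e \in M -> edge_of e) /\
  (forall v, vertex_of v -> exists! e, e \in M /\ incident v e).

Definition kekulean : Prop := exists M, perfect_matching M.

Definition alternating (M : {fset edge}) (c : cell) : Prop :=
  exists2 k, (k < 2)%N &
    forall i, (i < 6)%N -> ((nth (mke 0 0 0) (hex_edge_seq c) i \in M) <-> odd (i + k)).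

Definition res_adj (M M' : {fset edge}) : Prop :=
  exists2 c, c \in S & (M `\` M') `|` (M' `\` M) = hex_edges c.

(* Clar covers, given by the set of hexagon components and the set of
   single-edge components: the components are pairwise vertex-disjoint and
   together cover all vertices of H (spanning subgraph). *)
Definition clar_cover (C : {fset cell} * {fset edge}) : Prop :=
  (forall c, c \in C.1 -> c \in S) /\
  (forall e, e \in C.2 -> edge_of e) /\
  (forall v, vertex_of v ->
     ((exists! c, c \in C.1 /\ v \in hex_verts c) /\ (forall e, e \in C.2 -> ~ incident v e))
     \/
     ((forall c, c \in C.1 -> v \notin hex_verts c) /\ (exists! e, e \in C.2 /\ incident v e))).

(* vertex set of the induced subgraph f(C) of R(H) *)
Definition fC (C : {fset cell} * {fset edge}) (M : {fset edge}) : Prop :=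
  [/\ perfect_matching M, (forall c, c \in C.1 -> alternating M c)
    & (forall e, e \in C.2 -> e \in M)].

(* the subgraph of R(H) induced by the vertex set X is isomorphic to Q_n
   (vertices of Q_n: subsets of 'I_n, adjacent iff they differ in one element) *)
Definition induces_cube (n : nat) (X : {fset edge} -> Prop) : Prop :=
  (forall M, X M -> perfect_matching M) /\
  exists phi : {fset edge} -> {set 'I_n},
    [/\ (forall M M', X M -> X M' -> phi M = phi M' -> M = M'),
        (forall A, exists2 M, X M & phi M = A) &
        (forall M M', X M -> X M' ->
           (res_adj M M' <-> #|((phi M :\: phi M') :|: (phi M' :\: phi M))%SET| = 1%N))].

End Graph.

(* Main.v *)
Require Import Defs.
From HB Require Import structures.
From mathcomp Require Import all_boot all_order all_algebra.
From mathcomp Require Import finmap.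
From mathcomp Require Import zify.
From Stdlib Require Import IndefiniteDescription.
Local Open Scope fset_scope.

Module Aux.
Set Implicit Arguments. Unset Strict Implicit. Unset Printing Implicit Defensive.

Local Open Scope ring_scope.
Lemma i3_0 : (inord 0 : 'I_3) = Ordinal (isT : (0 < 3)%N). Proof. by apply: val_inj; rewrite /= inordK. Qed.
Lemma i3_1 : (inord 1 : 'I_3) = Ordinal (isT : (1 < 3)%N). Proof. by apply: val_inj; rewrite /= inordK. Qed.
Lemma i3_2 : (inord 2 : 'I_3) = Ordinal (isT : (2 < 3)%N). Proof. by apply: val_inj; rewrite /= inordK. Qed.

Lemma edge_ind (P : edge -> Prop) :
  (forall x y, P (mke x y 0)) -> (forall x y, P (mke x y 1)) -> (forall x y, P (mke x y 2)) ->
  forall e, P e.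
Proof.
move=> H0 H1 H2 [[x y] [[|[|[|d]]] Hd]] //.
- have -> : Ordinal Hd = inord 0 by apply: val_inj; rewrite /= inordK. exact: H0.
- have -> : Ordinal Hd = inord 1 by apply: val_inj; rewrite /= inordK. exact: H1.
- have -> : Ordinal Hd = inord 2 by apply: val_inj; rewrite /= inordK. exact: H2.
Qed.

Definition cA (e : edge) : cell :=
  let: ((x, y), d) := e in if val d == 0%N then (x, y) else ((x - 1)%R, y).
Definition cB (e : edge) : cell :=
  let: ((x, y), d) := e in if val d == 2%N then (x, y) else ((x - 1)%R, (y + 1)%R).

Lemma ord3E a b (p : (a < 3)%N) (q : (b < 3)%N) : (Ordinal p == Ordinal q) = (a == b)%N.
Proof. by []. Qed.
Ltac norm := rewrite /mke ?i3_0 ?i3_1 ?i3_2 /=.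

Lemma mem_hex e c : (e \in hex_edges c) = (c == cA e) || (c == cB e).
Proof.
case: c => i j; elim/edge_ind: e => x y; rewrite /hex_edges /hex_edge_seq !inE; norm;
  rewrite !xpair_eqE !ord3E /=; lia.
Qed.

Ltac inj := repeat match goal with
  | H : (_, _) = (_, _) |- _ => injection H; clear H; intros
  | H : true = false |- _ => discriminate H
  | H : false = true |- _ => discriminate H
  end.

Definition incident_b (v : vertex) (e : edge) : bool :=
  (v == edge_black e) || (v == edge_white e).
Lemma incidentE v e : incident v e <-> incident_b v e.
Proof. rewrite /incident /incident_b; split; first by case=> ->; rewrite eqxx ?orbT.
by case/orP => /eqP ->; [left|right]. Qed.

Lemma incident_hex v e c : incident v e -> e \in hex_edges c -> v \in hex_verts c.
Proof.
rewrite incidentE mem_hex; case: c => i j.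
elim/edge_ind: e => x y; rewrite /incident_b /edge_black /edge_white /hex_verts; norm;
  case: v => [[a b] []]; rewrite !inE !xpair_eqE /= ?andbT ?andbF ?orbF; lia.
Qed.

Lemma share1 c d e f : c != d -> e \in hex_edges c -> e \in hex_edges d ->
  f \in hex_edges c -> f \in hex_edges d -> e = f.
Proof.
rewrite !mem_hex; case: c => c1 c2; case: d => d1 d2.
elim/edge_ind: e => x y; elim/edge_ind: f => x' y'; norm; rewrite !xpair_eqE /= => H1 H2 H3 H4 H5;
  apply/eqP; rewrite !xpair_eqE ?ord3E /=; lia.
Qed.

Lemma hex_inj c d : hex_edges c = hex_edges d -> c = d.
Proof.
move=> H; apply/eqP; apply/negPn/negP => cd.
have E0 : mke c.1 c.2 0 \in hex_edges c by case: c {H cd} => i j; rewrite !inE eqxx.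
have E1 : mke (c.1 + 1) c.2 1 \in hex_edges c by case: c {H cd E0} => i j; rewrite !inE eqxx ?orbT.
have := share1 cd E0 _ E1; rewrite -H => /(_ E0 E1).
norm; move/eqP; rewrite !xpair_eqE ord3E andbF. by [].
Qed.

Definition hE (c : cell) k := nth (mke 0 0 0) (hex_edge_seq c) k.
Definition hV (c : cell) k := nth (bl 0 0) (hex_verts c) k.
Definition hhalf c (b : bool) : {fset edge} :=
  if b then [fset hE c 0; hE c 2; hE c 4] else [fset hE c 1; hE c 3; hE c 5].

Lemma hE_in c k : (k < 6)%N -> hE c k \in hex_edges c.
Proof. by case: c => i j; case: k => [|[|[|[|[|[|k]]]]]]; rewrite // /hE /= !inE eqxx ?orbT. Qed.

Lemma hex_hE c e : e \in hex_edges c -> exists2 k, (k < 6)%N & e = hE c k.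
Proof.
rewrite /hex_edges inE /= => H; exists (index e (hex_edge_seq c)).
  by case: c H => i j H; rewrite -[6%N]/(size (hex_edge_seq (i, j))) index_mem.
by rewrite /hE nth_index.
Qed.

Lemma hE_half c m b : (m < 6)%N -> (hE c m \in hhalf c b) = (b == ~~ odd m).
Proof.
case: c => i j; case: b; case: m => [|[|[|[|[|[|m]]]]]] => //= _; rewrite /hhalf /hE /= !inE; norm;
  rewrite !xpair_eqE ?ord3E /=; lia.
Qed.

Lemma hV_in c k : (k < 6)%N -> hV c k \in hex_verts c.
Proof. by case: c => i j; case: k => [|[|[|[|[|[|k]]]]]]; rewrite // /hV /= !inE eqxx ?orbT. Qed.

Lemma consec c k : (k < 6)%N ->
  incident_b (hV c (k.+1 %% 6)) (hE c k) && incident_b (hV c (k.+1 %% 6)) (hE c (k.+1 %% 6)).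
Proof.
case: c => i j; case: k => [|[|[|[|[|[|k]]]]]] => //= _; rewrite /hV /hE /incident_b /edge_black /edge_white /=; norm;
  rewrite !xpair_eqE /=; lia.
Qed.

Lemma hE_neq c k l : (k < 6)%N -> (l < 6)%N -> k != l -> hE c k != hE c l.
Proof.
case: c => i j; case: k => [|[|[|[|[|[|k]]]]]] => //= _; case: l => [|[|[|[|[|[|l]]]]]] => //= _ _;
  rewrite /hE /=; norm; rewrite !xpair_eqE ?ord3E /=; lia.
Qed.

Lemma in_fset3 (T : choiceType) (e a b c : T) : e \in [fset a; b; c] -> [\/ e = a, e = b | e = c].
Proof. by rewrite !inE => /orP [/orP [] | ] /eqP ->; [constructor 1|constructor 2|constructor 3]. Qed.

Lemma half_sub c b e : e \in hhalf c b -> e \in hex_edges c.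
Proof.
by case: b => /in_fset3 [] ->; apply: hE_in.
Qed.

Lemma hV_hex c v : v \in hex_verts c -> exists2 k, (k < 6)%N & v = hV c k.
Proof.
move=> H; exists (index v (hex_verts c)).
  by case: c H => i j H; rewrite -[6%N]/(size (hex_verts (i, j))) index_mem.
by rewrite /hV nth_index.
Qed.

Ltac hvclose := rewrite /hhalf /hV /hE /incident_b /edge_black /edge_white /= ?inE; norm;
  rewrite !xpair_eqE ?ord3E /=; lia.

Lemma half_vert c b v : v \in hex_verts c -> exists2 e, e \in hhalf c b & incident_b v e.
Proof.
case/hV_hex => k Hk ->; case: c => i j; case: b; move: Hk; case: k => [|[|[|[|[|[|k]]]]]] => //= _.
all: first [ exists (hE (i, j) 0); hvclose | exists (hE (i, j) 1); hvclose | exists (hE (i, j) 2); hvclose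
           | exists (hE (i, j) 3); hvclose | exists (hE (i, j) 4); hvclose | exists (hE (i, j) 5); hvclose ].
Qed.

Lemma half_uniq c b v e f : e \in hhalf c b -> f \in hhalf c b -> incident_b v e -> incident_b v f -> e = f.
Proof.
case: c => i j; case: b => /in_fset3 [] -> /in_fset3 [] -> //; rewrite /hE /=;
  rewrite /incident_b /edge_black /edge_white; norm; case: v => [[a b0] []];
  rewrite !xpair_eqE /= ?andbF ?andbT ?orbF; lia.
Qed.

Local Close Scope ring_scope.

Lemma pm_uniq S N v e f : perfect_matching S N -> vertex_of S v ->
  incident v e -> incident v f -> e \in N -> f \in N -> e = f.
Proof.
case=> _ H Hv ie if' eN fN; case: (H v Hv) => u [_ Hu].
by rewrite -(Hu e) ?(Hu f).
Qed.

Lemma hex_vertex_of S c v : c \in S -> v \in hex_verts c -> vertex_of S v.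
Proof. by move=> cS vc; exists c. Qed.

Lemma edge_vertex S e : edge_of S e -> vertex_of S (edge_black e).
Proof. case=> c cS ec; exists c => //; apply: (incident_hex _ ec); by left. Qed.

Definition sd (A B : {fset edge}) := (A `\` B) `|` (B `\` A).
Lemma in_sd A B e : (e \in sd A B) = (e \in A) (+) (e \in B).
Proof. by rewrite !inE; case: (e \in A); case: (e \in B). Qed.

Lemma sdC A B : sd A B = sd B A.
Proof. by apply/fsetP => e; rewrite !in_sd addbC. Qed.

Lemma sd_inj A B B' : sd A B = sd A B' -> B = B'.
Proof.
move=> H; apply/fsetP => e; move/fsetP: H => /(_ e); rewrite !in_sd.
by case: (e \in A); case: (e \in B); case: (e \in B').
Qed.

Definition alt' (N : {fset edge}) c :=
  exists b, forall e, e \in hex_edges c -> (e \in N) = (e \in hhalf c b).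

Lemma alt_alt' N c : alternating N c <-> alt' N c.
Proof.
split.
- case=> k Hk H; exists (k == 1%N) => e /hex_hE [m Hm ->].
  rewrite hE_half //; have := H m Hm; clear H; rewrite -/(hE c m).
  move: Hk; case: k => [|[|k]] //= _; rewrite ?addn0 ?addn1 /=;
  case: (hE c m \in N); case: (odd m) => -[H1 H2] //=;
  first [ by case: (H1 isT) | by case: (H2 isT) ].
- case=> b H; exists (nat_of_bool b); first by clear H; case: b.
  move=> i Hi; rewrite -/(hE c i) H ?hE_in // hE_half // oddD.
  by clear H; case: b; case: (odd i).
Qed.

Lemma sd_alt S N N' c : perfect_matching S N -> perfect_matching S N' -> c \in S ->
  sd N N' = hex_edges c -> alt' N c.
Proof.
move=> pN pN' cS H.
have step k : (k < 6)%N -> (hE c (k.+1 %% 6) \in N) = ~~ (hE c k \in N).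
  move=> Hk; have /andP [i1 i2] := consec c Hk.
  have Hv : vertex_of S (hV c (k.+1 %% 6)) by apply: (hex_vertex_of cS); apply: hV_in; rewrite ltn_mod.
  have Hneq : hE c k != hE c (k.+1 %% 6).
    apply: hE_neq => //; first by rewrite ltn_mod.
    by clear -Hk; move: Hk; case: k => [|[|[|[|[|[|k]]]]]].
  have mem k' : (k' < 6)%N -> (hE c k' \in N) (+) (hE c k' \in N').
    by move=> Hk'; rewrite -in_sd H hE_in.
  have m1 := mem _ Hk; have m2 := mem (k.+1 %% 6) (ltn_mod _ _).
  move: m1 m2; case E1: (hE c k \in N); case E2: (hE c (k.+1 %% 6) \in N) => //= m1 m2.
  + by case/negP: Hneq; apply/eqP; apply: (pm_uniq pN Hv _ _ E1 E2); apply/incidentE.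
  + by case/negP: Hneq; apply/eqP; apply: (pm_uniq pN' Hv _ _ m1 m2); apply/incidentE.
exists (hE c 0 \in N) => e /hex_hE [m Hm ->]; rewrite hE_half //.
elim: m Hm => [|m IH] Hm; first by case: (hE c 0 \in N).
have := step m (ltnW Hm); rewrite modn_small // => ->; rewrite IH ?(ltnW Hm) //=.
by case: (hE c 0 \in N); case: (odd m).
Qed.

Lemma alt_vertex N c v : alt' N c -> v \in hex_verts c ->
  exists e, [/\ e \in N, e \in hex_edges c & incident v e].
Proof.
case=> b H vc; have [e eh ie] := half_vert b vc.
exists e; split; [by rewrite H ?(half_sub eh) | exact: (half_sub eh) | exact/incidentE].
Qed.

Lemma alt_ext N N' c : alt' N c -> (forall e, e \in hex_edges c -> (e \in N) = (e \in N')) -> alt' N' c.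
Proof. case=> b H H'; exists b => e ec; by rewrite -H' ?H. Qed.

Section CC.
Lemma cc_hex_uniq S C c d v : clar_cover S C -> c \in C.1 -> d \in C.1 ->
  v \in hex_verts c -> v \in hex_verts d -> c = d.
Proof.
case=> H1 [_ H3] cC dC vc vd; have vS := hex_vertex_of (H1 _ cC) vc.
case: (H3 v vS) => [[[u [_ Hu]] _] | [H _]].
  by rewrite -(Hu c) ?(Hu d).
by have := H _ cC; rewrite vc.
Qed.

Lemma cc_edge_hex S C c e v : clar_cover S C -> c \in C.1 -> v \in hex_verts c ->
  e \in C.2 -> ~ incident v e.
Proof.
case=> H1 [_ H3] cC vc eC; have vS := hex_vertex_of (H1 _ cC) vc.
case: (H3 v vS) => [[_ H] | [H _]]; first exact: H.
by have := H _ cC; rewrite vc.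
Qed.

Lemma cc_hexedge S C c d e : clar_cover S C -> c \in C.1 -> d \in C.1 ->
  e \in hex_edges c -> e \in hex_edges d -> c = d.
Proof.
move=> HC cC dC ec ed; apply: (cc_hex_uniq HC cC dC (v := edge_black e));
  apply: incident_hex; (by left) || done.
Qed.

Lemma cc_C2_nothex S C c e : clar_cover S C -> c \in C.1 -> e \in C.2 -> e \notin hex_edges c.
Proof.
move=> HC cC eC; apply/negP => ec.
by apply: (cc_edge_hex HC cC (incident_hex (or_introl erefl) ec) eC); left.
Qed.

Lemma fC_edge S C M e : clar_cover S C -> fC S C M -> e \in M ->
  (forall d, d \in C.1 -> e \notin hex_edges d) -> e \in C.2.
Proof.
move=> HC [pM Halt H2] eM nh.
have vS : vertex_of S (edge_black e) by apply: edge_vertex; case: pM => P _; exact: P.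
case: HC => _ [_ /(_ _ vS)] [[[d [[dC vd] _]] _] | [_ [f [[fC if'] _]]]].
- have /alt_alt' A := Halt d dC; have [f [fM fd iff']] := alt_vertex A vd.
  have ef : e = f by apply: (pm_uniq pM vS _ iff' eM fM); left.
  by move: (nh d dC); rewrite ef fd.
- have ef : e = f by apply: (pm_uniq pM vS _ if' eM (H2 _ fC)); left.
  by rewrite ef.
Qed.

Lemma alt_xor M M' d e : alt' M d -> alt' M' d -> e \in hex_edges d ->
  (e \in M) (+) (e \in M') = (hE d 0 \in M) (+) (hE d 0 \in M').
Proof.
case=> b H [b' H'] /hex_hE [m Hm ->].
rewrite (H (hE d m)) ?(H (hE d 0)) ?(H' (hE d m)) ?(H' (hE d 0)) ?hE_in // !hE_half //=.
by clear H H'; case: b; case: b'; case: (odd m).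
Qed.

Lemma fC_eq S C M M' : clar_cover S C -> fC S C M -> fC S C M' ->
  (forall d, d \in C.1 -> (hE d 0 \in M) = (hE d 0 \in M')) -> M = M'.
Proof.
move=> HC fM fM' H; apply/fsetP => e.
have [pM A1 S1] := fM; have [pM' A2 S2] := fM'.
case: (boolP (has (fun d => e \in hex_edges d) C.1)).
- case/hasP => d dC ed.
  have := alt_xor (proj1 (alt_alt' _ _) (A1 d dC)) (proj1 (alt_alt' _ _) (A2 d dC)) ed.
  rewrite (H d dC); by case: (e \in M); case: (e \in M'); case: (hE d 0 \in M').
- move=> /hasPn nh.
  case eM: (e \in M); case eM': (e \in M') => //.
  + by have := S2 e (fC_edge HC fM eM nh); rewrite eM'.
  + by have := S1 e (fC_edge HC fM' eM' nh); rewrite eM.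
Qed.
End CC.

Definition Mb (C : {fset cell} * {fset edge}) (b : cell -> bool) : {fset edge} :=
  C.2 `|` \bigcup_(d <- C.1) hhalf d (b d).

Lemma in_Mb C b e : e \in Mb C b -> e \in C.2 \/ exists2 d, d \in C.1 & e \in hhalf d (b d).
Proof.
rewrite /Mb inE => /orP [H|/bigfcupP [d /andP [dC _] H]]; [by left | right; by exists d].
Qed.

Lemma Mb_fC S C b : clar_cover S C ->
  fC S C (Mb C b) /\ (forall d, d \in C.1 -> (hE d 0 \in Mb C b) = b d).
Proof.
move=> HC; have [H1 [H2 H3]] := HC.
have hin d e : d \in C.1 -> e \in hhalf d (b d) -> e \in Mb C b.
  by move=> dC eh; rewrite /Mb inE; apply/orP; right; apply/bigfcupP; exists d => //; rewrite dC.
have c2in e : e \in C.2 -> e \in Mb C b by move=> eC; rewrite /Mb inE eC.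
have altd d : d \in C.1 -> forall e, e \in hex_edges d -> (e \in Mb C b) = (e \in hhalf d (b d)).
  move=> dC e ed; apply/idP/idP; last exact: hin.
  case/in_Mb => [eC | [d' d'C eh]].
    by have := cc_C2_nothex HC dC eC; rewrite ed.
  by rewrite (cc_hexedge HC dC d'C ed (half_sub eh)).
have pm : perfect_matching S (Mb C b).
  split.
    move=> e /in_Mb [eC | [d dC eh]]; first exact: H2.
    by exists d; [exact: H1 | exact: half_sub eh].
  move=> v vS; case: (H3 v vS) => [[[c [[cC vc] Hu]] Hn] | [Hn [f [[fC if'] Hu]]]].
  - have [e eh ie] := half_vert (b c) vc.
    exists e; split; first by split; [exact: hin eh | exact/incidentE].
    move=> f [/in_Mb [fC | [d dC fh]] if'].
      by case: (Hn f fC).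
    have vd : v \in hex_verts d by apply: incident_hex if' (half_sub fh).
    have cd := cc_hex_uniq HC cC dC vc vd; subst d.
    by apply: (half_uniq eh fh ie); apply/incidentE.
  - exists f; split; first by split; [exact: c2in | done].
    move=> g [/in_Mb [gC | [d dC gh]] ig]; first by apply: Hu.
    have vd : v \in hex_verts d by apply: incident_hex ig (half_sub gh).
    by have := Hn d dC; rewrite vd.
split.
  split => //.
  move=> d dC; apply/alt_alt'; exists (b d) => e ed; exact: altd.
move=> d dC; rewrite (altd d dC) ?hE_in // hE_half //=; by case: (b d).
Qed.

Lemma fC_adj S C M M' d0 : clar_cover S C -> fC S C M -> fC S C M' -> sd M M' = hex_edges d0 ->
  [/\ d0 \in C.1, (hE d0 0 \in M) != (hE d0 0 \in M') &
     forall d, d \in C.1 -> d != d0 -> (hE d 0 \in M) = (hE d 0 \in M')].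
Proof.
move=> HC fM fM' H.
have [pM A1 S1] := fM; have [pM' A2 S2] := fM'.
have key d : d \in C.1 -> (hE d 0 \in M) != (hE d 0 \in M') -> d = d0.
  move=> dC dif; apply/eqP; apply/negP => /negP dd0.
  have ins k : (k < 6)%N -> hE d k \in hex_edges d0.
    move=> Hk; rewrite -H in_sd.
    rewrite (alt_xor (proj1 (alt_alt' _ _) (A1 d dC)) (proj1 (alt_alt' _ _) (A2 d dC))) ?hE_in //.
    by move: dif; case: (hE d 0 \in M); case: (hE d 0 \in M').
  have := share1 dd0 (hE_in d (isT : (0 < 6)%N)) (ins 0%N isT) (hE_in d (isT : (1 < 6)%N)) (ins 1%N isT).
  by move/eqP; rewrite (negbTE (hE_neq d (isT : (0 < 6)%N) (isT : (1 < 6)%N) isT)).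
have [d dC dif] : exists2 d, d \in C.1 & (hE d 0 \in M) != (hE d 0 \in M').
  have [/hasP //|/hasPn Hn] := boolP (has (fun d => (hE d 0 \in M) != (hE d 0 \in M')) C.1).
  suff MM : M = M'.
    have := hE_in d0 (isT : (0 < 6)%N); rewrite -H in_sd MM; by case: (_ \in M').
  apply: (fC_eq HC fM fM') => d1 d1C; apply/eqP; apply/negP => /negP dif1.
  by have := Hn d1 d1C; rewrite dif1.
have dd0 := key d dC dif; subst d.
split => // d1 d1C dne; apply/eqP; apply/negP => /negP dif'.
by move: dne; rewrite (key d1 d1C dif') eqxx.
Qed.

Lemma fC_adj_conv S C M M' d : clar_cover S C -> fC S C M -> fC S C M' -> d \in C.1 ->
  (hE d 0 \in M) != (hE d 0 \in M') ->
  (forall d', d' \in C.1 -> d' != d -> (hE d' 0 \in M) = (hE d' 0 \in M')) ->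
  sd M M' = hex_edges d.
Proof.
move=> HC fM fM' dC dif agr.
have [pM A1 S1] := fM; have [pM' A2 S2] := fM'.
apply/fsetP => e; rewrite in_sd.
case: (boolP (has (fun d' => e \in hex_edges d') C.1)).
- case/hasP => d' d'C ed'.
  rewrite (alt_xor (proj1 (alt_alt' _ _) (A1 d' d'C)) (proj1 (alt_alt' _ _) (A2 d' d'C))) //.
  case: (eqVneq d' d) => [Edd | ne].
    by subst d'; rewrite ed'; move: dif; case: (hE d 0 \in M); case: (hE d 0 \in M').
  rewrite (agr d' d'C ne) addbb; apply/esym/negP => ed.
  by move: ne; rewrite (cc_hexedge HC d'C dC ed' ed) eqxx.
- move=> /hasPn nh.
  have -> : (e \in hex_edges d) = false by apply/negP => ed; have := nh d dC; rewrite ed.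
  case eM: (e \in M); case eM': (e \in M') => //.
  + by have := S2 e (fC_edge HC fM eM nh); rewrite eM'.
  + by have := S1 e (fC_edge HC fM' eM' nh); rewrite eM.
Qed.

Lemma part1 S C n : clar_cover S C -> #|` C.1| = n -> induces_cube S n (fC S C).
Proof.
move=> HC Hn.
pose s : seq cell := C.1.
have ss : size s = n by rewrite -Hn.
have us : uniq s := fset_uniq C.1.
pose cf (i : 'I_n) := nth (0, 0)%R s i.
have cfC i : cf i \in C.1 by apply: mem_nth; rewrite ss.
have cf_inj : injective cf.
  by move=> i j /eqP; rewrite /cf nth_uniq ?ss // => /eqP /val_inj.
have cf_surj d : d \in C.1 -> exists i, d = cf i.
  move=> dC; have Hi : (index d s < n)%N by rewrite -ss index_mem.
  by exists (Ordinal Hi); rewrite /cf /= nth_index.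
split; first by move=> M [].
exists (fun M => [set i | hE (cf i) 0 \in M]); split.
- move=> M M' fM fM' /setP E; apply: (fC_eq HC fM fM') => d dC.
  by have [i ->] := cf_surj d dC; have := E i; rewrite !inE.
- move=> A; pose b d := [exists i in A, cf i == d].
  have [fM E0] := Mb_fC b HC.
  exists (Mb C b) => //; apply/setP => i; rewrite inE (E0 _ (cfC i)).
  apply/existsP/idP => [[j /andP [jA /eqP /cf_inj <-]] // | iA].
  by exists i; rewrite iA eqxx.
- move=> M M' fM fM'.
  have DE : ([set i | hE (cf i) 0 \in M] :\: [set i | hE (cf i) 0 \in M'])
     :|: ([set i | hE (cf i) 0 \in M'] :\: [set i | hE (cf i) 0 \in M])
     = [set i | (hE (cf i) 0 \in M) != (hE (cf i) 0 \in M')].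
    by apply/setP => i; rewrite !inE; case: (_ \in M); case: (_ \in M').
  rewrite DE; split.
  + case=> d0 d0S H; have [d0C dif agr] := fC_adj HC fM fM' H.
    have [i0 Ei0] := cf_surj d0 d0C; subst d0.
    apply/eqP/cards1P; exists i0; apply/setP => i; rewrite !inE.
    case: (eqVneq i i0) => [-> // | ne].
    by rewrite (agr _ (cfC i)) ?eqxx //; apply: contra ne => /eqP /cf_inj ->.
  + move/eqP/cards1P => [i0 Di0].
    have : i0 \in [set i0] by rewrite inE.
    rewrite -Di0 inE => dif.
    exists (cf i0); first by case: HC => H1 _; exact: H1.
    apply: (fC_adj_conv HC fM fM' (cfC i0) dif) => d' d'C ne.
    have [i Ei] := cf_surj d' d'C; subst d'.
    apply/eqP/negP => /negP Hd.
    have : i \in [set i | (hE (cf i) 0 \in M) != (hE (cf i) 0 \in M')] by rewrite inE.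
    by rewrite Di0 inE => /eqP Eii; rewrite Eii eqxx in ne.
Qed.

Lemma sub1 S C1 C2 d : clar_cover S C1 -> clar_cover S C2 ->
  (forall M, fC S C1 M -> fC S C2 M) -> d \in C1.1 -> d \in C2.1.
Proof.
move=> HC1 HC2 T dC.
have [fM E] := Mb_fC (fun _ => false) HC1.
have [fM' E'] := Mb_fC (fun x => x == d) HC1.
have H : sd (Mb C1 (fun _ => false)) (Mb C1 (fun x => x == d)) = hex_edges d.
  apply: (fC_adj_conv HC1 fM fM' dC); first by rewrite E ?E' ?eqxx.
  by move=> d' d'C ne; rewrite E ?E' // (negbTE ne).
by have [] := fC_adj HC2 (T _ fM) (T _ fM') H.
Qed.

Lemma sub2 S C1 C2 e : clar_cover S C1 -> clar_cover S C2 ->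
  (forall M, fC S C2 M -> fC S C1 M) -> e \in C1.2 -> e \in C2.2.
Proof.
move=> HC1 HC2 T eC.
have [fM E] := Mb_fC (fun _ => false) HC2.
have [fM' E'] := Mb_fC (fun _ => true) HC2.
have [_ _ S1] := T _ fM; have [_ _ S1'] := T _ fM'.
have e0 := S1 e eC; have e1 := S1' e eC.
case: (boolP (has (fun d => e \in hex_edges d) C2.1)).
- case/hasP => d dC ed.
  have [_ A1 _] := fM; have [_ A2 _] := fM'.
  have := alt_xor (proj1 (alt_alt' _ _) (A1 d dC)) (proj1 (alt_alt' _ _) (A2 d dC)) ed.
  by rewrite e0 e1 E ?E'.
- by move=> /hasPn nh; apply: (fC_edge HC2 fM e0 nh).
Qed.

Lemma part2 S C1 C2 : clar_cover S C1 -> clar_cover S C2 ->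
  (forall M, fC S C1 M <-> fC S C2 M) -> C1 = C2.
Proof.
move=> HC1 HC2 T.
have T1 M : fC S C1 M -> fC S C2 M by move/T.
have T2 M : fC S C2 M -> fC S C1 M by move/T.
case: C1 HC1 T T1 T2 => H1 E1 HC1 T T1 T2; case: C2 HC2 T T1 T2 => H2 E2 HC2 T T1 T2.
congr pair; apply/fsetP => x; apply/idP/idP.
- exact: (sub1 HC1 HC2 T1).
- exact: (sub1 HC2 HC1 T2).
- exact: (sub2 HC1 HC2 T2).
- exact: (sub2 HC2 HC1 T1).
Qed.

Import GRing.Theory.

Lemma bound_s (s : seq cell) d : d \in s -> (d.1 <= (\sum_(x <- s) absz x.1)%:Z)%R.
Proof.
have h1 (a : int) (n : nat) : (a <= (absz a + n)%N)%R by lia.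
have h2 (a : int) (n m : nat) : (a <= n%:Z)%R -> (a <= (m + n)%N)%R by lia.
elim: s => [|x s IH] //; rewrite inE big_cons => /orP [/eqP -> | /IH]; [exact: h1 | exact: h2].
Qed.

Lemma even_cells (s : seq cell) :
  (forall e, ~~ odd (count (fun c => e \in hex_edges c) s)) -> forall c, ~~ odd (count_mem c s).
Proof.
move=> H c; apply/negP => oc.
have step d : odd (count_mem d s) -> odd (count_mem ((d.1 + 1)%R, d.2) s).
  case: d => x y /= od; have := H (mke (x + 1)%R y 2).
  have neq : (x, y) != ((x + 1)%R, y) by rewrite xpair_eqE; lia.
  have -> : count (fun c => mke (x + 1)%R y 2 \in hex_edges c) s =
            count (predU (pred1 (x, y)) (pred1 ((x + 1)%R, y))) s.
    apply: eq_count => c'; rewrite mem_hex /cA /cB /mke i3_2 /= addrK.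
    by [].
  rewrite -[count (predU _ _) s]addn0.
  have <- : count (predI (pred1 (x, y)) (pred1 ((x + 1)%R, y))) s = 0%N.
    apply/eqP; rewrite -leqn0 leqNgt -has_count; apply/hasP => -[c' _ /andP [/eqP -> /eqP E]].
    by rewrite E eqxx in neq.
  rewrite count_predUI oddD od /=; by case: (odd _).
have all k : odd (count_mem ((c.1 + k%:Z)%R, c.2) s).
  elim: k => [|k IH]; first by rewrite addr0 -surjective_pairing.
  have := step _ IH => /=; rewrite -addrA -PoszD addn1 //.
set B := (\sum_(x <- s) absz x.1)%N.
have := all (absz B + absz c.1).+1 => /odd_gt0; rewrite -has_count => /hasP [d ds /eqP Ed].
have h3 (a : int) (n : nat) : ~ (a + ((absz n + absz a).+1)%:Z <= n%:Z)%R by lia.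
by have := bound_s ds; rewrite Ed /= -/B => /h3.
Qed.

Lemma four_cells p q r s :
  (forall e, ~~ odd ((e \in hex_edges p) + (e \in hex_edges r) + (e \in hex_edges q) + (e \in hex_edges s))%N) ->
  p != q -> p != r -> s = p /\ r = q.
Proof.
move=> H pq pr.
have E := even_cells (s := [:: p; r; q; s]).
have E' : forall c, ~~ odd (count_mem c [:: p; r; q; s]).
  apply: E => e /=; have := H e; by rewrite addn0 !addnA.
have := E' p; rewrite /= eqxx (eq_sym r) (negbTE pr) (eq_sym q) (negbTE pq) /= addn0.
case: (eqVneq s p) => [sp | sp] //= _; subst s; split => //.
have := E' r; rewrite /= eqxx (negbTE pr) /=.
by case: (eqVneq q r) => [-> // | qr].
Qed.

Lemma square M Mi Mj Mij p q r s :
  sd M Mi = hex_edges p -> sd M Mj = hex_edges q -> sd Mi Mij = hex_edges r ->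
  sd Mj Mij = hex_edges s -> Mi != Mj -> M != Mij -> s = p /\ r = q.
Proof.
move=> Hp Hq Hr Hs ij mm.
apply: four_cells.
- move=> e; rewrite -Hp -Hq -Hr -Hs !in_sd.
  by case: (e \in M); case: (e \in Mi); case: (e \in Mj); case: (e \in Mij).
- apply: contra_neq ij => pq; subst q; rewrite -Hq in Hp; exact: sd_inj Hp.
- apply: contra_neq mm => pr; subst r; rewrite -Hr sdC in Hp; exact: sd_inj Hp.
Qed.

Lemma cid2 (T : Type) (P Q : T -> Prop) : (exists2 x, P x & Q x) -> {x | P x /\ Q x}.
Proof. move=> H; apply: constructive_indefinite_description; case: H => x Px Qx; by exists x. Qed.

Lemma set_ind_card (n : nat) (P : {set 'I_n} -> Prop) :
  P set0 -> (forall (j : 'I_n) (B : {set 'I_n}), j \notin B -> P B -> P (j |: B)) -> forall A, P A.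
Proof.
move=> P0 PS A; elim: {A}#|A| {-2}A (eqxx #|A|) => [|k IH] A /eqP Ak.
  by move/cards0_eq: Ak => ->.
have [j jA] : exists j, j \in A.
  by apply/set0Pn; rewrite -card_gt0 Ak.
rewrite -(setD1K jA); apply: PS; first by rewrite !inE eqxx.
by apply: IH; rewrite (cardsD1 j A) jA add1n in Ak; case: Ak => ->.
Qed.

Lemma part3 S n X : induces_cube S n X ->
  exists2 C, clar_cover S C /\ #|` C.1| = n & forall M, X M <-> fC S C M.
Proof.
case=> Xpm [phi [inj surj adj]].
have HM A : exists2 M, X M & phi M = A by exact: surj.
pose Mof A := proj1_sig (cid2 (HM A)).
have MofX A : X (Mof A) by case: (proj2_sig (cid2 (HM A))).
have Mofphi A : phi (Mof A) = A by case: (proj2_sig (cid2 (HM A))).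
have pmM A : perfect_matching S (Mof A) by apply: Xpm.
have Mof_inj A B : Mof A = Mof B -> A = B by move=> E; rewrite -(Mofphi A) E Mofphi.
have ad1 (A : {set 'I_n}) (i : 'I_n) : i \notin A -> exists2 c, c \in S & sd (Mof A) (Mof (i |: A)) = hex_edges c.
  move=> iA; apply/(adj _ _ (MofX _) (MofX _)); rewrite !Mofphi.
  apply/eqP/cards1P; exists i; apply/setP => j; rewrite !inE.
  by case: (eqVneq j i) => [-> | ]; [rewrite (negbTE iA) | case: (j \in A)].
have n0 (i : 'I_n) : i \notin (set0 : {set 'I_n}) by rewrite inE.
pose c i := proj1_sig (cid2 (ad1 _ i (n0 i))).
have cS i : c i \in S by case: (proj2_sig (cid2 (ad1 _ i (n0 i)))).
have c0 i : sd (Mof set0) (Mof (i |: set0)) = hex_edges (c i).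
  by case: (proj2_sig (cid2 (ad1 _ i (n0 i)))).
have key : forall (A : {set 'I_n}) (i : 'I_n), i \notin A -> sd (Mof A) (Mof (i |: A)) = hex_edges (c i).
  elim/set_ind_card => [i _ | j B jB IH i iB]; first exact: c0.
  have ij : i != j by apply: contraNneq iB => ->; rewrite !inE eqxx.
  have iB' : i \notin B by apply: contra iB => iB'; rewrite !inE iB' orbT.
  have jiB : j \notin i |: B by rewrite !inE negb_or eq_sym ij jB.
  have [r _ Hr] := ad1 (i |: B) j jiB.
  have [s _ Hs] := ad1 (j |: B) i iB.
  rewrite setUCA in Hr.
  have nij : Mof (i |: B) != Mof (j |: B).
    apply/eqP => /Mof_inj /setP /(_ i); rewrite !inE eqxx /= (negbTE ij) (negbTE iB').
    by [].
  have nM : Mof B != Mof (i |: (j |: B)).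
    apply/eqP => /Mof_inj /setP /(_ i); rewrite !inE eqxx /= (negbTE iB').
    by [].
  have [Es _] := square (IH i iB') (IH j jB) Hr Hs nij nM.
  by rewrite Hs Es.
have altM0 (i : 'I_n) : alt' (Mof set0) (c i) by apply: (sd_alt (pmM _) (pmM _) (cS i) (c0 i)).
have cneq (i j : 'I_n) : i != j -> c i != c j.
  move=> ij; apply/eqP => cij; have := c0 i; rewrite cij -(c0 j) => /sd_inj /Mof_inj /setP /(_ i).
  by rewrite !inE eqxx (negbTE ij).
have disj (i j : 'I_n) v : i != j -> v \in hex_verts (c i) -> v \in hex_verts (c j) -> False.
  move=> ij vi vj.
  have vS : vertex_of S v := hex_vertex_of (cS i) vi.
  have ji : j \notin i |: set0 by rewrite !inE eq_sym (negbTE ij).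
  have Hj := key _ j ji.
  have altMi : alt' (Mof (i |: set0)) (c j) by apply: (sd_alt (pmM _) (pmM _) (cS j) Hj).
  have [m [mM0 mi im]] := alt_vertex (altM0 i) vi.
  have [m' [m'M0 m'j im']] := alt_vertex (altM0 j) vj.
  have mm' : m = m' := pm_uniq (pmM _) vS im im' mM0 m'M0. subst m'.
  have [f [fMi fj iff']] := alt_vertex altMi vj.
  have mMi : m \notin Mof (i |: set0).
    by have := mi; rewrite -c0 in_sd mM0; case: (_ \in Mof _).
  have fi : f \in hex_edges (c i).
    apply/negPn/negP => fi.
    have fM0 : f \in Mof set0.
      by move: fi; rewrite -c0 in_sd fMi; case: (_ \in Mof set0).
    have := pm_uniq (pmM _) vS iff' im fM0 mM0 => fm; subst f.
    by rewrite fMi in mMi.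
  have := share1 (cneq i j ij) mi m'j fi fj => mf; subst f.
  by rewrite fMi in mMi.
have edisj (i j : 'I_n) e : i != j -> e \in hex_edges (c i) -> e \notin hex_edges (c j).
  move=> ij ei; apply/negP => ej; apply: (disj i j (edge_black e) ij);
    apply: incident_hex ei || apply: incident_hex ej; by left.
have c_inj : injective c.
  move=> i j cij; apply/eqP; apply/negPn/negP => ij.
  by apply: (disj i j (hV (c i) 0) ij); [apply: hV_in | rewrite cij; apply: hV_in].
pose C2 := Mof set0 `\` \bigcup_(i <- enum 'I_n) hex_edges (c i).
have inC2 e : e \in C2 = (e \in Mof set0) && [forall i, e \notin hex_edges (c i)].
  rewrite /C2 inE andbC; congr (_ && _); apply/idP/forallP => [H i | H].
    by apply: contra H => ei; apply/bigfcupP; exists i; rewrite ?mem_enum.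
  by apply/negP => /bigfcupP [i _ ei]; have := H i; rewrite ei.
pose C := ([fset c i | i : 'I_n], C2).
have inC1 d : d \in C.1 <-> exists i, d = c i.
  split; first by case/imfsetP => i _ ->; exists i.
  by case=> i ->; apply/imfsetP; exists i.
have inv : forall A : {set 'I_n},
   (forall i, alt' (Mof A) (c i) /\ (hE (c i) 0 \in Mof A) = (hE (c i) 0 \in Mof set0) (+) (i \in A)) /\
   (forall e, e \in C2 -> e \in Mof A).
  elim/set_ind_card => [|j B jB [IH1 IH2]].
    split; last by move=> e; rewrite inC2 => /andP [].
    by move=> i; split => //; rewrite inE addbF.
  have Hj := key B j jB.
  have same e : e \notin hex_edges (c j) -> (e \in Mof (j |: B)) = (e \in Mof B).
    move=> ej; move: ej; rewrite -Hj in_sd; by case: (e \in Mof B); case: (e \in Mof _).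
  split.
  - move=> i; case: (eqVneq i j) => [-> | ij].
      split; first exact: (sd_alt (pmM _) (pmM B) (cS j) (etrans (sdC _ _) Hj)).
      have := hE_in (c j) (isT : (0 < 6)%N); rewrite -Hj in_sd (proj2 (IH1 j)) !inE eqxx (negbTE jB) /=.
      by case: (_ \in Mof set0); case: (_ \in Mof _).
    have [A1 A2] := IH1 i.
    split.
      apply: (alt_ext A1) => e ei; rewrite same //; exact: edisj ij ei.
    rewrite same; last by apply: edisj ij (hE_in _ _).
    by rewrite A2 !inE (negbTE ij).
  - move=> e eC; rewrite same ?IH2 //.
    by move: eC; rewrite inC2 => /andP [_ /forallP /(_ j)].
have HC : clar_cover S C.
  split; first by move=> d /inC1 [i ->].
  split; first by move=> e; rewrite inC2 => /andP [eM _]; case: (pmM set0) => P _; exact: P.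
  move=> v vS; case: (boolP [exists i, v \in hex_verts (c i)]).
  - case/existsP => i vi; left; split.
      exists (c i); split; first by split => //; apply/inC1; exists i.
      move=> d [/inC1 [j ->] vj]; case: (eqVneq j i) => [-> // | ji].
      by case: (disj j i v ji vj vi).
    move=> e; rewrite inC2 => /andP [eM /forallP /(_ i) ei] ie.
    have [f [fM fi iff']] := alt_vertex (altM0 i) vi.
    have ef := pm_uniq (pmM _) vS ie iff' eM fM; subst f.
    by rewrite fi in ei.
  - rewrite negb_exists => /forallP nv; right; split.
      by move=> d /inC1 [i ->]; apply: nv.
    case: (pmM set0) => _ /(_ v vS) [e [[eM ie] Hu]].
    exists e; split.
      split => //; rewrite inC2 eM /=; apply/forallP => i; apply/negP => ei.
      by have := nv i; rewrite (incident_hex ie ei).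
    by move=> f [fC iff']; apply: Hu; split => //; move: fC; rewrite inC2 => /andP [].
have XfC M : X M -> fC S C M.
  move=> XM; have <- : Mof (phi M) = M by apply: inj => //; rewrite Mofphi.
  have [I1 I2] := inv (phi M).
  split; [exact: pmM | | exact: I2].
  by move=> d /inC1 [i ->]; apply/alt_alt'; exact: (proj1 (I1 i)).
exists C.
  split => //; rewrite card_imfset //=; first by rewrite size_enum_ord.
move=> M; split; first exact: XfC.
move=> fM; pose A := [set i | (hE (c i) 0 \in M) != (hE (c i) 0 \in Mof set0)].
suff <- : Mof A = M by [].
apply: (fC_eq HC (XfC _ (MofX A)) fM) => d /inC1 [i ->].
rewrite (proj2 ((inv A).1 i)) !inE.
by case: (_ \in M); case: (_ \in Mof set0).
Qed.

End Aux.
Import Aux.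

Theorem corollary1 (S : {fset cell}) :
  hexagonal_system S -> kekulean S ->
  forall n : nat,
    (* f maps Clar covers with n hexagons to induced Q_n's *)
    (forall C, clar_cover S C -> #|` C.1| = n -> induces_cube S n (fC S C)) /\
    (* f is injective *)
    (forall C1 C2, clar_cover S C1 -> #|` C1.1| = n ->
                   clar_cover S C2 -> #|` C2.1| = n ->
                   (forall M, fC S C1 M <-> fC S C2 M) -> C1 = C2) /\
    (* f is surjective *)
    (forall X : {fset edge} -> Prop, induces_cube S n X ->
       exists2 C, clar_cover S C /\ #|` C.1| = n & forall M, X M <-> fC S C M).
Proof.
move=> _ _ n; split; [|split].
- by move=> C HC Hn; apply: part1.
- by move=> C1 C2 H1 _ H2 _ T; apply: part2 H1 H2 T.
- by move=> X HX; apply: part3.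
Qed.
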